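(* Fix $n \ge 2$. If $x_1, x_2, \dots, x_n$ is a sequence of positive real numbers with mean $\mu = \frac1n\sum_{i=1}^n x_i$ and variance $\sigma^2 = \frac1n\sum_{i=1}^n (x_i-\mu)^2$ (with $\sigma\ge 0$), then $$\mu - (x_1 x_2 \cdots x_n)^{1/n} \le \sqrt{n-1}\,\sigma.$$ *)

(* Defs.v *)
From Stdlib Require Import Reals.
Open Scope R_scope.

(* sum_{i=0}^{n-1} f i  and  prod_{i=0}^{n-1} f i  (0-based indices) *)
Fixpoint sumR (n : nat) (f : nat -> R) : R :=
  match n with O => 0 | S m => sumR m f + f m end.
Fixpoint prodR (n : nat) (f : nat -> R) : R :=
  match n with O => 1 | S m => prodR m f * f m end.

Definition mean (n : nat) (x : nat -> R) : R := sumR n x / INR n.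
Definition variance (n : nat) (x : nat -> R) : R :=
  sumR n (fun i => (x i - mean n x) ^ 2) / INR n.
Definition geomean (n : nat) (x : nat -> R) : R :=
  Rpower (prodR n x) (/ INR n).

(* Main.v *)
Require Import Defs.
From Stdlib Require Import Reals Lra Lia Psatz.
Open Scope R_scope.

Lemma sumR_sq_shift n (f : nat -> R) c :
  sumR n (fun j => (f j + c)^2) = sumR n (fun j => f j ^ 2) + 2 * c * sumR n f + INR n * c^2.
Proof. induction n; cbn [sumR]. simpl; ring. rewrite IHn, S_INR. ring. Qed.

Lemma sumR_sub n (x : nat -> R) m : sumR n (fun j => x j - m) = sumR n x - INR n * m.
Proof. induction n; cbn [sumR]. simpl; ring. rewrite IHn, S_INR. ring. Qed.

Lemma sumR_nonneg_ge n (f : nat -> R) i :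
  (forall j, (j < n)%nat -> 0 <= f j) -> (i < n)%nat -> f i <= sumR n f.
Proof.
  induction n; intros H Hi. lia. cbn [sumR].
  assert (Hs : forall k, (k <= n)%nat -> 0 <= sumR k f).
  { intro k; induction k; intro Hk; simpl. lra.
    pose proof (H k ltac:(lia)). pose proof (IHk ltac:(lia)). lra. }
  destruct (Nat.eq_dec i n).
  - subst. pose proof (Hs n (le_n n)). lra.
  - pose proof (IHn (fun j Hj => H j ltac:(lia)) ltac:(lia)). pose proof (H n ltac:(lia)). lra.
Qed.

Lemma sq_nonneg_sum n (g : nat -> R) : 0 <= sumR n (fun j => g j ^ 2).
Proof. induction n; cbn [sumR]. lra. pose proof (pow2_ge_0 (g n)). lra. Qed.

Lemma prodR_ge n (x : nat -> R) m :
  0 < m -> (forall j, (j < n)%nat -> m <= x j) -> m ^ n <= prodR n x.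
Proof.
  induction n; intros Hm H; simpl. lra.
  pose proof (IHn Hm (fun j Hj => H j ltac:(lia))). pose proof (H n ltac:(lia)).
  pose proof (pow_lt m n Hm).
  rewrite Rmult_comm. apply Rmult_le_compat; lra.
Qed.

Lemma exists_min n (x : nat -> R) :
  (1 <= n)%nat -> exists i, (i < n)%nat /\ forall j, (j < n)%nat -> x i <= x j.
Proof.
  induction n; intro H. lia.
  destruct n. exists 0%nat. split. lia. intros j Hj. assert (j = 0%nat) by lia. subst; lra.
  destruct (IHn ltac:(lia)) as [i [Hi Hm]].
  destruct (Rle_dec (x i) (x (S n))).
  - exists i. split. lia. intros j Hj. destruct (Nat.eq_dec j (S n)). subst; lra. apply Hm; lia.
  - exists (S n). split. lia. intros j Hj. destruct (Nat.eq_dec j (S n)). subst; lra.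
    pose proof (Hm j ltac:(lia)). lra.
Qed.

Theorem corollary1 (n : nat) (x : nat -> R) :
  (2 <= n)%nat ->
  (forall i, (i < n)%nat -> 0 < x i) ->
  mean n x - geomean n x <= sqrt (INR n - 1) * sqrt (variance n x).
Proof.
  intros Hn Hpos.
  destruct (exists_min n x ltac:(lia)) as [i [Hi Hmin]].
  set (m := x i). pose proof (Hpos i Hi) as Hm0.
  set (N := INR n).
  assert (HN : 2 <= N) by (unfold N; replace 2 with (INR 2) by (simpl; ring); apply le_INR; lia).
  assert (HN0 : N <> 0) by lra. assert (HN1 : N - 1 <> 0) by lra.
  assert (HG : m <= geomean n x).
  { unfold geomean.
    assert (Hp : m ^ n <= prodR n x) by (apply prodR_ge; auto).
    assert (Hmn : 0 < m ^ n) by (apply pow_lt; auto).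
    rewrite <- (Rpower_pow n m Hm0) in Hp, Hmn.
    apply Rle_trans with (Rpower (Rpower m (INR n)) (/ INR n)).
    - rewrite Rpower_mult. rewrite Rinv_r by exact HN0. rewrite Rpower_1. apply Rle_refl. exact Hm0.
    - apply Rle_Rpower_l. left; apply Rinv_0_lt_compat; fold N; lra. lra. }
  set (mu := mean n x).
  set (SS := sumR n (fun j => (x j - mu) ^ 2)).
  assert (Hsum : sumR n (fun j => x j - mu) = 0).
  { rewrite sumR_sub. unfold mu, mean. fold N. field. auto. }
  set (d := m - mu). set (c := d / (N - 1)).
  assert (Hineq : (d + c)^2 <= SS + N * c^2).
  { pose proof (sumR_sq_shift n (fun j => x j - mu) c) as E.
    rewrite Hsum in E. fold N in E. fold SS in E.
    rewrite Rmult_0_r, Rplus_0_r in E. rewrite <- E.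
    apply (sumR_nonneg_ge n (fun j => (x j - mu + c)^2) i).
    intros; apply pow2_ge_0. auto. }
  assert (Hdc : d + c = d * N / (N - 1)) by (unfold c; field; auto).
  rewrite Hdc in Hineq. unfold c in Hineq.
  assert (Hkey : N * d^2 <= (N - 1) * SS).
  { assert (H1 : (d * N / (N - 1)) ^ 2 * (N-1)^2 <= (SS + N * (d / (N - 1)) ^ 2) * (N-1)^2).
    { apply Rmult_le_compat_r. apply pow2_ge_0. auto. }
    replace ((d * N / (N - 1)) ^ 2 * (N-1)^2) with (d^2 * N^2) in H1 by (field; auto).
    replace ((SS + N * (d / (N - 1)) ^ 2) * (N-1)^2) with (SS*(N-1)^2 + N * d^2) in H1 by (field; auto).
    nra. }
  assert (HS : 0 <= SS).
  { unfold SS. apply sq_nonneg_sum. }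
  rewrite <- sqrt_mult_alt by lra.
  unfold variance. fold mu. fold SS. fold N.
  apply Rle_trans with (mu - m). fold mu; lra.
  destruct (Rle_dec (mu - m) 0). 
  - pose proof (sqrt_pos ((N - 1) * (SS / N))). lra.
  - rewrite <- (sqrt_Rsqr (mu - m)) by lra.
    apply sqrt_le_1_alt. unfold Rsqr.
    replace ((mu - m) * (mu - m)) with (d^2) by (unfold d; ring).
    apply Rmult_le_reg_l with N. lra.
    replace (N * ((N - 1) * (SS / N))) with ((N-1)*SS) by (field; auto). lra.
Qed.
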